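(* Let $I$ be an infinite set of positive integers and for each $n \in I$ let $H_n \le S_n$ be a subgroup. Suppose that the minimal degrees $m(H_n)$ are not bounded, i.e. for every constant $K$ there are infinitely many $n \in I$ with $m(H_n) > K$. Suppose moreover that for every $n \in I$ and every $k \le n$, $H_n$ has at most $n^{k/7}$ elements of support $k$. Then the family $(S_n, H_n)_{n \in I}$ is indistinguishable.
   Context: For a finite group $G$, let $\mathrm{Irr}(G)$ be its set of complex irreducible characters and $d_\chi=\chi(e)$. For $H \le G$ let $D_H = \frac{1}{|G|}\sum_{\chi \in \mathrm{Irr}(G)} d_\chi \big|\sum_{h \in H, h \neq e}\chi(h)\big|$ (the $L_1$ distance between the distributions $P_H(\chi)=\frac{d_\chi}{|G|}\sum_{h\in H}\chi(h)$ and $P_{\{e\}}$ on $\mathrm{Irr}(G)$ produced by weak quantum Fourier sampling). A family $(G_i,H_i)_{i \in I}$ with $H_i \le G_i$, $I$ an infinite set of positive integers and $|G_i| \to \infty$, is called distinguishable if there is a constant $c>0$ such that $D_{H_i} \ge (\log|G_i|)^{-c}$ for all sufficiently large $i \in I$, and indistinguishable otherwise. $S_n$ is the symmetric group on $\{1,\ldots,n\}$. For $g \in S_n$, the support $\mathrm{supp}(g)$ is the number of points moved by $g$. The minimal degree of $H \le S_n$ is $m(H) = \min\{\mathrm{supp}(h): h \in H, h \neq e\}$, with the convention $m(\{e\}) = +\infty$. *)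

(* Defs.v *)
From HB Require Import structures.
From mathcomp Require Import all_boot all_order all_algebra all_fingroup all_solvable all_field all_character.
From mathcomp Require Import Rstruct.
From Stdlib Require Reals.
Local Open Scope ring_scope.
Notation R := Rdefinitions.R.
Notation ln := Rpower.ln.
Notation Rpower := Rpower.Rpower.
Set Implicit Arguments. Unset Strict Implicit. Unset Printing Implicit Defensive.
Import Order.TTheory GRing.Theory Num.Theory.

Definition supp (n : nat) (g : {perm 'I_n}) : nat := #|[set x | g x != x]|.

(* Minimal degree m(H) of H <= S_n; None encodes +infinity (H trivial). *)
Definition min_degree (n : nat) (H : {group {perm 'I_n}}) : option nat :=
  if [exists h in H, h != 1%g]
  then Some (\big[minn/n]_(h in H | h != 1%g) supp h)
  else None.

Definition min_degree_gt (n : nat) (H : {group {perm 'I_n}}) (K : nat) : Prop :=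
  match min_degree H with None => True | Some m => (K < m)%N end.

Definition Sym_n (n : nat) : {group {perm 'I_n}} := [set: {perm 'I_n}]%G.

Definition DH (gT : finGroupType) (G H : {group gT}) : algC :=
  (#|G|%:R)^-1 * \sum_(i : Iirr G) ('chi[G]_i 1%g * `|\sum_(h in H | h != 1%g) 'chi[G]_i h|)%R.

(* Comparison of a real number x with an algebraic number a (for a real,
   i.e. a \in Num.real, this is exactly x <= a): every rational strictly
   below x is <= a. *)
Definition Rle_algC (x : R) (a : algC) : Prop :=
  forall q : rat, (ratr q < x) -> (ratr q <= a)%R.

Definition distinguishable (I : nat -> Prop) (gT : nat -> finGroupType)
  (G H : forall i, {group gT i}) : Prop :=
  exists c : R, (0 < c)%R /\
    exists N : nat, forall i, I i -> (N <= i)%N ->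
      Rle_algC (Rpower (ln #|G i|%:R) (- c)) (DH (G i) (H i)).

Definition indistinguishable (I : nat -> Prop) (gT : nat -> finGroupType)
  (G H : forall i, {group gT i}) : Prop :=
  ~ @distinguishable I gT G H.

(* Main.v *)
Require Import Defs.
From HB Require Import structures.
From mathcomp Require Import all_boot all_order all_algebra all_fingroup all_solvable all_field all_character.
From mathcomp Require Import Rstruct.
From Stdlib Require Reals.
From mathcomp Require Import zify ring lra.
Set Implicit Arguments. Unset Strict Implicit. Unset Printing Implicit Defensive.
Import Order.TTheory GRing.Theory Num.Theory.

Module CentM.

Section Cent.
Variable n : nat.
Variable h : {perm 'I_n}.
Let S := [set x | h x != x].
Let R := [set x | (h x != x) && [forall y in porbit h x, (x <= y)%N]].

Lemma fix_porbit x y : h x = x -> y \in porbit h x -> y = x.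
Proof.
move=> hx /porbitP [i ->]; elim: i => [|i IH]; first by rewrite expg0 perm1.
by rewrite expgSr permM IH.
Qed.

Lemma RsubS : R \subset S.
Proof. by apply/subsetP => x; rewrite !inE => /andP[]. Qed.

Lemma R_cover x : x \in S -> exists2 r, r \in R & exists i, x = (h ^+ i)%g r.
Proof.
rewrite inE => hx.
have Px : x \in porbit h x by apply: porbit_id.
case: (arg_minnP (fun y : 'I_n => nat_of_ord y) Px) => r rin0 rmin.
have rin : r \in porbit h x := rin0.
exists r; last first.
  by move: rin; rewrite porbit_sym => /porbitP.
have eqo : porbit h r = porbit h x by apply/eqP; rewrite eq_porbit_mem.
rewrite inE; apply/andP; split.
  apply/negP => /eqP hr; move: rin; rewrite porbit_sym => /(fix_porbit hr) xr.
  by move: hx; rewrite xr hr eqxx.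
by apply/forall_inP => y; rewrite eqo; apply: rmin.
Qed.

Lemma card_R : (2 * #|R| <= #|S|)%N.
Proof.
have sub : h @: R \subset S :\: R.
  apply/subsetP => _ /imsetP [x xR ->].
  move: xR; rewrite !inE => /andP [hx /forall_inP xm].
  rewrite (inj_eq perm_inj) hx /=.
  rewrite andbT; apply/negP => /forall_inP hm.
  have h1 : (h x <= x)%N.
    apply: hm; by rewrite porbit_sym; have := mem_porbit h 1 x; rewrite expg1.
  have h2 : (x <= h x)%N.
    apply: xm; by have := mem_porbit h 1 x; rewrite expg1.
  have e : h x = x by apply/val_inj/eqP; rewrite eqn_leq h1 h2.
  by rewrite e eqxx in hx.
have := subset_leq_card sub.
rewrite card_imset; last exact: perm_inj.
rewrite cardsD (setIidPr RsubS) => le.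
have := subset_leq_card RsubS.
lia.
Qed.


Lemma comm_act c : commute c h -> forall x, h (c x) = c (h x).
Proof. by move=> cm x; rewrite -!permM cm. Qed.

Local Open Scope group_scope.
Lemma cent_card : (#|'C[h]| <= (n - #|S|)`! * #|S| ^ #|R|)%N.
Proof.
pose F := ~: S.
pose fam := fun i : 'I_n => if i \in R then mem S else mem [set i].
pose phi := fun c : {perm 'I_n} =>
  (restr_perm F c, [ffun i => if i \in R then c i else i]).
have Nc : forall c, c \in 'C[h] -> c \in 'N(F | 'P).
  move=> c /cent1P cm; apply/astabsP => x /=.
  rewrite !inE /= (comm_act cm) (inj_eq perm_inj) //.
have inj : {in 'C[h] &, injective phi}.
  move=> c1 c2 C1 C2 [e1 e2]; apply/permP => x.
  case: (boolP (x \in F)) => xF.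
    by rewrite -(restr_permE (Nc _ C1) xF) -(restr_permE (Nc _ C2) xF) e1.
  have xS : x \in S by move: xF; rewrite inE negbK.
  have [r rR [i ->]] := R_cover xS.
  have cX : forall c, c \in 'C[h] -> c ((h ^+ i)%g r) = (h ^+ i)%g (c r).
    move=> c /cent1P cm; rewrite -!permM.
    by have := commuteX i cm => ->.
  rewrite (cX _ C1) (cX _ C2).
  have := congr1 (fun f : {ffun 'I_n -> 'I_n} => f r) e2; rewrite /= !ffunE rR => ->.
  done.
have sub : phi @: 'C[h] \subset setX [set p | perm_on F p] [set f | f \in family fam].
  apply/subsetP => _ /imsetP [c cC ->].
  rewrite !inE restr_perm_on /=; apply/forallP => i.
  rewrite /fam ffunE; case: ifP => iR //.
  - have := Nc _ cC => /astabsP Hc.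
    have iS : i \in S by apply: (subsetP (RsubS)).
    have := Hc i; rewrite /= !inE; rewrite !inE in iS; rewrite iS /=.
    by rewrite /aperm; case: (h (c i) != c i).
  - by rewrite inE.
have := subset_leq_card sub.
rewrite card_in_imset // cardsX.
have -> : #|[set p | perm_on F p]| = #|F|`!.
  by rewrite -card_perm; apply: eq_card => p; rewrite inE.
have -> : #|[set f | f \in family fam]| = #|family fam|.
  by apply: eq_card => p; rewrite inE.
rewrite card_family.
have -> : #|F| = (n - #|S|)%N by rewrite cardsCs setCK card_ord.
rewrite foldrE big_map.
have -> : (\big[muln/1]_(j <- enum 'I_n) #|fam j| = \prod_(j in R) #|S|)%N.
  have -> : (\big[muln/1]_(j <- enum 'I_n) #|fam j| = \prod_(j : 'I_n) #|fam j|)%N.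
    by rewrite big_enum.
  rewrite (bigID (fun j => j \in R)) /=.
  rewrite [X in (_ * X)%N]big1 ?muln1; last first.
    by move=> j /negbTE jR; rewrite /fam jR cards1.
  by apply: eq_bigr => j jR; rewrite /fam jR.
by rewrite prod_nat_const.
Qed.

End Cent.

End CentM.
Import CentM.

Module ArithM.

Lemma expn_le m n e : m <= n -> m ^ e <= n ^ e.
Proof. by move=> mn; elim: e => [|e IH] //; rewrite !expnS leq_mul. Qed.

Lemma fact_le_ffact n k : k <= n -> k`! <= n ^_ k.
Proof.
move=> kn; rewrite -ffactnn !ffact_prod; apply: leq_prod => i _.
by apply: leq_sub2r.
Qed.

Lemma ffact_half n k : 2 * k <= n -> n ^ k <= 2 ^ k * n ^_ k.
Proof.
move=> kn; rewrite ffact_prod.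
have -> : n ^ k = \prod_(i < k) n by rewrite prod_nat_const card_ord.
have -> : 2 ^ k = \prod_(i < k) 2 by rewrite prod_nat_const card_ord.
rewrite -big_split /=; apply: leq_prod => i _.
have := ltn_ord i; lia.
Qed.

Lemma muln4_le a b c d a' b' c' d' :
  a <= a' -> b <= b' -> c <= c' -> d <= d' -> a * b * c * d <= a' * b' * c' * d'.
Proof. by move=> *; rewrite !leq_mul. Qed.

Section Arith.
Variables (B n k r a c C Q : nat).
Hypotheses (B1 : 2 ^ 14 <= B) (B2 : 2 ^ 7 * 3 ^ 14 <= B) (B3 : 4 <= B) (Bn : B <= n).
Hypotheses (kn : k <= n) (k2 : 56 * C + 42 <= 2 * k) (ha : a ^ 7 <= n ^ k)
  (hc : c <= (n - k)`! * k ^ r) (hr : 2 * r <= k) (hQ : Q <= n ^ 14) (hQ0 : Q = 4 ^ 14).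
Hypothesis (fact_pow : k ^ k <= 3 ^ k * k`!).

Let D := 56 * C + 28.

Lemma F1 : Q * n ^ D <= n ^ (2 * k).
Proof.
have -> : 2 * k = D + (2 * k - D) by rewrite /D; lia.
rewrite expnD mulnC leq_mul2l; apply/orP; right.
apply: (leq_trans hQ).
apply: leq_pexp2l; rewrite /D; lia.
Qed.

Let P := n ^_ k.
Let T := Q * n ^ D * n ^ (4 * k) * k ^ (7 * k).

Lemma F2 : T <= P ^ 14.
Proof.
have k0 : 0 < k by lia.
have n0 : 0 < n by lia.
case: (leqP (2 * k) n) => hk.
- have M0 : 0 < 2 ^ (14 * k) by rewrite expn_gt0.
  rewrite -(leq_pmul2l M0).
  apply: (@leq_trans (n ^ k * n ^ (2 * k) * n ^ (4 * k) * n ^ (7 * k))).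
    rewrite /T 2!mulnA; apply: muln4_le => //.
    + rewrite mulnC expnM expnAC; apply: expn_le; lia.
    + apply: leq_trans (F1); by rewrite mulnC.
    + by apply: expn_le.
  rewrite -!expnD.
  apply: (@leq_trans ((2 ^ k * P) ^ 14)).
    have -> : k + 2 * k + 4 * k + 7 * k = k * 14 by lia.
    by rewrite expnM; apply: expn_le; apply: ffact_half.
  by rewrite expnMn -expnM [(k * 14)%N]mulnC.
- have M0 : 0 < 3 ^ (14 * k) * 2 ^ (7 * k) by rewrite muln_gt0 !expn_gt0.
  rewrite -(leq_pmul2l M0).
  apply: (@leq_trans (n ^ k * n ^ (2 * k) * n ^ (4 * k) * k ^ (7 * k))).
    rewrite /T 2!mulnA; apply: muln4_le => //.
    + have -> : 3 ^ (14 * k) * 2 ^ (7 * k) = (2 ^ 7 * 3 ^ 14) ^ k.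
        by rewrite expnMn -!expnM mulnC [(7 * k)%N]mulnC [(14 * k)%N]mulnC.
      by apply: expn_le; apply: leq_trans Bn.
    + apply: leq_trans (F1); by rewrite mulnC.
  have h1 : n ^ k <= 2 ^ k * k ^ k.
    by rewrite -expnMn; apply: expn_le; lia.
  have h2 : k ^ k <= 3 ^ k * P.
    by apply: (leq_trans fact_pow); rewrite leq_mul2l fact_le_ffact ?orbT.
  apply: (@leq_trans ((2 ^ k * k ^ k) ^ 7 * k ^ (7 * k))).
    have -> : n ^ k * n ^ (2 * k) * n ^ (4 * k) = (n ^ k) ^ 7.
      by rewrite -!expnD -expnM; congr (n ^ _); lia.
    by rewrite leq_mul2r expn_le ?orbT.
  rewrite expnMn -!expnM -mulnA -expnD.
  have -> : k * 7 + 7 * k = k * 14 by lia.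
  apply: (@leq_trans (2 ^ (k * 7) * (3 ^ k * P) ^ 14)).
    by rewrite leq_mul2l; apply/orP; right; rewrite [k ^ (k * 14)]expnM; apply: expn_le.
  apply: eq_leq; rewrite expnMn -expnM [(k*14)%N]mulnC [(7*k)%N]mulnC mulnA [(2 ^ (k*7) * _)%N]mulnC.
done.
Qed.

Lemma arith_main : (2 * n ^ (2 * C + 1) * a) ^ 2 * c <= n`!.
Proof.
have k0 : 0 < k by lia.
have H : (4 * n ^ (4 * C + 2) * a ^ 2 * k ^ r) ^ 14 <= P ^ 14.
  rewrite !expnMn -hQ0; apply: leq_trans F2; rewrite /T.
  apply: muln4_le => //.
  - by rewrite -expnM; apply: eq_leq; congr (n ^ _); rewrite /D; lia.
  - have -> : a ^ 14 * a ^ 14 = (a ^ 7) ^ 4 by rewrite -expnD -expnM.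
    by rewrite [(4 * k)%N]mulnC expnM; apply: expn_le.
  - by rewrite -expnM; apply: leq_pexp2l => //; lia.
rewrite leq_exp2r // in H.
have -> : (2 * n ^ (2 * C + 1) * a) ^ 2 = 4 * n ^ (4 * C + 2) * a ^ 2.
  by rewrite !expnMn -expnM; congr (_ * n ^ _ * _); lia.
apply: (@leq_trans (4 * n ^ (4 * C + 2) * a ^ 2 * ((n - k)`! * k ^ r))).
  by rewrite leq_mul2l hc orbT.
rewrite -(ffact_fact kn) [((n - k)`! * _)%N]mulnC mulnA leq_mul2r.
by apply/orP; right; exact: H.
Qed.

End Arith.

End ArithM.
Import ArithM.

Local Open Scope ring_scope.

Lemma amgm_real (R : numDomainType) (d a m : R) :
  d \is Num.real -> a \is Num.real -> m \is Num.real ->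
  2 * m * (d * a) <= d ^+ 2 + m ^+ 2 * a ^+ 2.
Proof.
move=> dr ar mr.
have : 0 <= (d - m * a) ^+ 2 by rewrite -realEsqr rpredB // rpredM.
have -> : (d - m * a) ^+ 2 = d ^+ 2 + m ^+ 2 * a ^+ 2 - 2 * m * (d * a) by ring.
by rewrite subr_ge0.
Qed.

Lemma char_bound (gT : finGroupType) (G : {group gT}) (x : gT) (m : nat) :
  x \in G -> (0 < m)%N -> (m ^ 2 * #|'C_G[x]%g| <= #|G|)%N ->
  (#|G|%:R)^-1 * \sum_i ('chi[G]_i 1%g * `|'chi_i x|) <= (m%:R)^-1 :> algC.
Proof.
move=> xG m0 hm.
have key : 2 * m%:R * \sum_i ('chi[G]_i 1%g * `|'chi_i x|)
            <= #|G|%:R + m%:R ^+ 2 * #|'C_G[x]%g|%:R :> algC.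
  rewrite mulr_sumr -(irr_sum_square G).
  have -> : #|'C_G[x]%g|%:R = \sum_i `|'chi[G]_i x| ^+ 2 :> algC.
    rewrite (eq_bigr (fun i => 'chi[G]_i x * ('chi_i x)^*)); last by move=> i _; rewrite normCK.
    by rewrite second_orthogonality_relation // class_refl mulr1n.
  rewrite mulr_sumr -big_split /=; apply: ler_sum => i _.
  apply: amgm_real; rewrite ?realn ?normr_real //.
  by apply: gtr0_real; apply: irr1_gt0.
have Gpos : 0 < #|G|%:R :> algC by rewrite ltr0n cardG_gt0.
have mpos : 0 < m%:R :> algC by rewrite ltr0n.
have hm' : m%:R ^+ 2 * #|'C_G[x]%g|%:R <= #|G|%:R :> algC.
  by rewrite -natrX -natrM ler_nat.
set s := \sum_i _ in key *.
have sm : m%:R * s <= #|G|%:R.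
  have : 2 * m%:R * s <= 2 * #|G|%:R :> algC.
    apply: le_trans key _; rewrite mulr2n mulrDl mul1r lerD2l //.
  move=> h2; rewrite -(@ler_pM2l _ 2) ?ltr0n // mulrA; exact: h2.
rewrite mulrC ler_pdivrMr // -(@ler_pM2l _ m%:R) // mulrA mulfV ?mul1r //.
by rewrite gt_eqF.
Qed.


Lemma pow_succ_bound k : (k.+1 ^ k <= 3 * k ^ k)%N.
Proof.
case: k => [|k] //.
set m := k.+1.
rewrite -(ler_nat R) natrM !natrX.
have m0 : (0 : R) < m%:R by rewrite ltr0n.
have -> : (m.+1%:R : R) = m%:R * (1 + m%:R^-1).
  by rewrite mulrDr mulr1 mulfV ?gt_eqF // -natr1.
rewrite exprMn mulrC ler_pM2r ?exprn_gt0 //.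
have e1 : 1 + m%:R^-1 <= Rtrigo_def.exp (m%:R^-1 : R).
  by apply/RleP; apply: Rpower.exp_ineq1_le.
apply: (@le_trans _ _ (Rtrigo_def.exp (m%:R^-1) ^+ m)).
  apply: lerXn2r => //; rewrite qualifE /=.
    by apply: addr_ge0 => //; rewrite invr_ge0 ltW.
  by apply: le_trans e1; apply: addr_ge0 => //; rewrite invr_ge0 ltW.
rewrite expRX (_ : m%:R^-1 *+ m = 1); last first.
  by rewrite -(mulr_natl (m%:R^-1) m) mulfV ?gt_eqF.
by apply/RleP; apply: Rpower.exp_le_3.
Qed.

Lemma fact_pow k : (k ^ k <= 3 ^ k * k`!)%N.
Proof.
elim: k => [|k IH] //.
rewrite expnS factS.
apply: (@leq_trans (k.+1 * (3 * k ^ k))); first by rewrite leq_mul2l pow_succ_bound orbT.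
apply: (@leq_trans (k.+1 * (3 * (3 ^ k * k`!)))); first by rewrite leq_mul2l leq_mul2l IH !orbT.
by rewrite expnS; apply: eq_leq; lia.
Qed.


Lemma DH_le (gT : finGroupType) (G H : {group gT}) (f : gT -> nat) :
  H \subset G ->
  (forall h, h \in H -> h != 1%g -> (0 < f h)%N /\ (f h ^ 2 * #|'C_G[h]%g| <= #|G|)%N) ->
  DH G H <= \sum_(h in H | h != 1%g) (f h)%:R^-1.
Proof.
move=> sHG hf; rewrite /DH.
apply: (@le_trans _ _ ((#|G|%:R)^-1 *
   \sum_(h in H | h != 1%g) \sum_i ('chi[G]_i 1%g * `|'chi_i h|))).
  rewrite ler_pM2l ?invr_gt0 ?ltr0n ?cardG_gt0 //.
  rewrite exchange_big /=; apply: ler_sum => i _.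
  rewrite -mulr_sumr ler_wpM2l ?ler_norm_sum //.
  by apply: ltW; apply: irr1_gt0.
rewrite mulr_sumr; apply: ler_sum => h /andP [hH h1].
have [f0 fle] := hf h hH h1.
by apply: char_bound => //; apply: (subsetP sHG).
Qed.

Lemma group_sum n (P : pred {perm 'I_n}) (E : nat) (a : nat -> nat) :
  (0 < E)%N ->
  (forall h, P h -> (supp h <= n)%N) ->
  (forall k, (#|[set g | P g && (supp g == k)]| <= a k)%N) ->
  \sum_(h | P h) ((E * a (supp h))%:R)^-1 <= (n.+1)%:R / E%:R :> algC.
Proof.
move=> E0 hs ha.
rewrite (partition_big (fun h => inord (supp h) : 'I_n.+1) predT) //=.
apply: (@le_trans _ _ (\sum_(j < n.+1) (E%:R)^-1)); last first.
  by rewrite sumr_const card_ord mulr_natl.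
apply: ler_sum => j _.
have e : forall h, P h && (inord (supp h) == j :> 'I_n.+1) -> supp h = j.
  move=> h /andP [Ph /eqP <-]; rewrite inordK //; exact: hs.
rewrite (eq_bigr (fun _ => ((E * a j)%:R)^-1)); last by move=> h /e ->.
rewrite sumr_const.
set c := #|_|.
have cle : (c <= a j)%N.
  apply: leq_trans (ha j); apply: subset_leq_card; apply/subsetP => h.
  move=> hh; have hh2 := hh; rewrite unfold_in /= in hh2.
  by rewrite inE (e _ hh2) eqxx andbT; case/andP: hh2.
case: (posnP c) => [->|c0]; first by rewrite mulr0n invr_ge0.
have a0 : (0 < a j)%N by apply: leq_trans cle.
rewrite -[_ *+ c]mulr_natr natrM invfM -mulrA -[X in _ <= X]mulr1 ler_pM2l ?invr_gt0 ?ltr0n //.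
by rewrite mulrC ler_pdivrMr ?ltr0n // mul1r ler_nat.
Qed.

Lemma hyp7 (n k a : nat) : (0 < n)%N ->
  a%:R <= Rpower n%:R (k%:R / 7%:R) :> R -> (a ^ 7 <= n ^ k)%N.
Proof.
move=> n0 h.
have nR : (0 : R) < n%:R by rewrite ltr0n.
set y := Rpower _ _ in h.
have y0 : 0 < y by apply/RltP; rewrite /y /Rpower.Rpower; apply: Exp_prop.exp_pos.
have e : y ^+ 7 = n%:R ^+ k.
  rewrite -!RpowE -!Rpower.Rpower_pow; try by apply/RltP.
  rewrite /y Rpower.Rpower_mult !INRE; congr Rpower.
  by rewrite RmultE divfK // pnatr_eq0.
rewrite -(ler_nat R) !natrX -e; apply: lerXn2r => //; rewrite qualifE /= ?ler0n //.
exact: ltW.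
Qed.

Lemma fact_le_pow n : (n`! <= n ^ n)%N.
Proof.
elim: n => [|n IH] //; rewrite factS expnS leq_mul2l; apply/orP; right.
by apply: leq_trans IH _; apply: expn_le.
Qed.

Lemma ln_le_x (x : R) : 0 < x -> ln x < x.
Proof.
move=> x0; have := Rpower.exp_ineq1_le (ln x).
rewrite Rpower.exp_ln; last by apply/RltP.
move/RleP; rewrite RplusE => h.
rewrite R1E in h; lra.
Qed.

Lemma ln_mono (x y : R) : 0 < x -> x <= y -> ln x <= ln y.
Proof.
move=> x0 xy; case: (eqVneq x y) => [->|ne]; first by [].
apply/ltW/RltP; apply: Rpower.ln_increasing; first by apply/RltP.
by apply/RltP; rewrite lt_neqAle ne xy.
Qed.

Lemma final_real (c : R) (C n : nat) : 0 < c -> c <= C%:R -> (0 < C)%N -> (3 <= n)%N ->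
  ratr ((n ^ (2 * C))%:R^-1 : rat) < Rpower (ln (n`!)%:R) (- c) :> R.
Proof.
move=> c0 cC C0 n3.
rewrite fmorphV.
rewrite rmorph_nat.
set L := ln _.
have f0 : (0 : R) < (n`!)%:R by rewrite ltr0n fact_gt0.
have L1 : 1 <= L.
  have e3 : Rtrigo_def.exp 1 <= (n`!)%:R.
    apply: le_trans; first by apply/RleP; apply: Rpower.exp_le_3.
    rewrite IZRposE INRE ler_nat /=.
    exact: leq_trans n3 (fact_geq n).
  have : ln (Rtrigo_def.exp 1) <= L.
    case: (eqVneq (Rtrigo_def.exp 1) (n`!)%:R) => [->|ne]; first by [].
    apply/ltW/RltP; apply: Rpower.ln_increasing; first by apply: Exp_prop.exp_pos.
    by apply/RltP; rewrite lt_neqAle ne e3.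
  by rewrite Rpower.ln_exp.
have Ln : L < (n * n)%:R.
  have n0 : (0 : R) < n%:R by rewrite ltr0n (leq_trans _ n3).
  apply: (@le_lt_trans _ _ (ln (n ^ n)%:R)).
    by apply: ln_mono => //; rewrite ler_nat fact_le_pow.
  rewrite natrX -RpowE Rpower.ln_pow; last by apply/RltP.
  by rewrite RmultE INRE natrM ltr_pM2l // ln_le_x.
have L0 : 0 < L by apply: lt_le_trans L1.
have RP0 : 0 < Rpower L c by apply/RltP; rewrite /Rpower.Rpower; apply: Exp_prop.exp_pos.
rewrite Rpower.Rpower_Ropp RinvE ltf_pV2 ?qualifE /= ?ltr0n ?expn_gt0 ?(leq_trans _ n3) //.
apply: (@le_lt_trans _ _ (Rpower L C%:R)).
  by apply/RleP; apply: Rpower.Rle_Rpower; apply/RleP.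
rewrite -INRE Rpower.Rpower_pow; last by apply/RltP.
rewrite RpowE natrX.
rewrite exprM -natrX (_ : (n ^ 2 = n * n)%N) ?mulnn //.
by rewrite ltrXn2r ?(ltW L0) // -lt0n.
Qed.

Lemma bigmin_leq (T : finType) (P : pred T) (F : T -> nat) (d : nat) x :
  P x -> (\big[minn/d]_(i | P i) F i <= F x)%N.
Proof.
move=> Px; have : x \in index_enum T by rewrite mem_index_enum.
elim: (index_enum T) => [//|y r IH]; rewrite inE big_cons => /orP [/eqP <-|xr].
  by rewrite Px geq_minl.
case: ifP => _; last exact: IH.
by rewrite geq_min IH ?orbT.
Qed.

Lemma min_degree_supp n (H : {group {perm 'I_n}}) K h :
  min_degree_gt H K -> h \in H -> h != 1%g -> (K < supp h)%N.
Proof.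
rewrite /min_degree_gt /min_degree => hm hH h1.
have ex : [exists h in H, h != 1%g] by apply/existsP; exists h; rewrite hH.
rewrite ex in hm; apply: leq_trans hm _.
by apply: (bigmin_leq (P := fun g => (g \in H) && (g != 1%g))); rewrite hH.
Qed.

Theorem proposition1 (I : nat -> Prop) (H : forall n : nat, {group {perm 'I_n}}) :
  (forall n, I n -> (0 < n)%N) ->
  (forall N : nat, exists n, (N < n)%N /\ I n) ->
  (forall K N : nat, exists n, (N < n)%N /\ I n /\ min_degree_gt (H n) K) ->
  (forall n k : nat, I n -> (k <= n)%N ->
     #|[set h in H n | supp h == k]|%:R <= Rpower n%:R (k%:R / 7%:R) :> R) ->
  @indistinguishable I (fun n => {perm 'I_n}) (fun n => Sym_n n) H.
Proof.
move=> hpos _ hmin hcount [c [c0 [N hN]]].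
have c0' : (0 : R) < c := c0.
pose C := Num.Def.archi_bound c.
have cC : c < C%:R by apply: archi_boundP; apply: ltW.
have C0 : (0 < C)%N by rewrite -(ltr_nat R); apply: lt_trans cC.
pose K := (28 * C + 21)%N.
have [B hB] : {B : nat | B = (2 ^ 14 * 3 ^ 14)%N} := exist _ _ erefl.
have [n [Nn [In hm]]] := hmin K (maxn N (maxn B 3)).
have n3 : (3 <= n)%N by move: Nn; rewrite !gtn_max => /and3P [_ _ /ltnW].
have Bn : (B <= n)%N by move: Nn; rewrite !gtn_max => /and3P [_ /ltnW].
have Nn' : (N <= n)%N by move: Nn; rewrite !gtn_max => /and3P [/ltnW].
have n0 : (0 < n)%N by apply: leq_trans n3.
have := hN n In Nn'.
have cardG : #|Sym_n n| = n`! by rewrite /Sym_n /= cardsT card_Sn.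
rewrite /= cardG => hle.
have := hle _ (final_real c0' (ltW cC) C0 n3).
suff lt : DH (Sym_n n) (H n) < ratr ((n ^ (2 * C))%:R^-1 : rat).
  by rewrite lt_geF.
rewrite fmorphV rmorph_nat.
pose a k := #|[set h in H n | supp h == k]|.
pose E := (2 * n ^ (2 * C + 1))%N.
have E0 : (0 < E)%N by rewrite muln_gt0 expn_gt0 n0.
have supp_le : forall h : {perm 'I_n}, (supp h <= n)%N.
  by move=> h; rewrite /supp -[X in (_ <= X)%N](card_ord n) max_card.
apply: (@le_lt_trans _ _ (\sum_(h in H n | h != 1%g) ((E * a (supp h))%:R)^-1)).
  apply: DH_le; first by rewrite /Sym_n subsetT.
  move=> h hH h1.
  have ak : (0 < a (supp h))%N.
    by rewrite card_gt0; apply/set0Pn; exists h; rewrite inE hH eqxx.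
  split; first by rewrite muln_gt0 E0.
  rewrite cardG /Sym_n /= setTI.
  have [Q hQ0] : {Q : nat | Q = (4 ^ 14)%N} := exist _ _ erefl.
  have hk := min_degree_supp hm hH h1.
  have B3 : (4 <= B)%N.
    rewrite hB; apply: (@leq_trans (2 ^ 14)).
      by apply: (@leq_trans (2 ^ 2)) => //; apply: leq_pexp2l.
    by rewrite leq_pmulr // expn_gt0.
  apply: (arith_main (B := B) (Q := Q) _ _ B3 Bn (supp_le h) _ _ (cent_card h) (card_R h) _ hQ0 (fact_pow _)).
  - by rewrite hB leq_pmulr // expn_gt0.
  - by rewrite hB leq_mul2r; apply/orP; right; apply: leq_pexp2l.
  - by rewrite /K in hk; lia.
  - exact: hyp7 n0 (hcount n (supp h) In (supp_le h)).
  - by rewrite hQ0; apply: expn_le; apply: leq_trans Bn.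
apply: (@le_lt_trans _ _ (n.+1%:R / E%:R)).
  apply: (group_sum (P := fun h => (h \in H n) && (h != 1%g))) => //.
  move=> k; apply: subset_leq_card; apply/subsetP => g; rewrite !inE.
  by case/andP => /andP [-> _] ->.
have M0 : (0 < n ^ (2 * C))%N by rewrite expn_gt0 n0.
rewrite ltr_pdivrMr ?ltr0n //.
have -> : (E%:R : algC) = (2 * n)%:R * (n ^ (2 * C))%:R.
  by rewrite -natrM /E expnD expn1; congr (_%:R); lia.
rewrite mulrC mulfK ?pnatr_eq0 -?lt0n // ltr_nat; lia.
Qed.
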